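(* For every integer $n\ge 3$, the square of the path $P_n^2$ admits a signed product cordial labeling.
   Context: A graph $G$ is signed product cordial if there is a vertex labeling $\alpha: V(G)\to\{1,-1\}$ such that, with the induced edge labeling $\alpha^*(uv)=\alpha(u)\alpha(v)$, we have $|v_\alpha(-1)-v_\alpha(1)|\le 1$ and $|e_{\alpha^*}(-1)-e_{\alpha^*}(1)|\le 1$. Here $v_\alpha(x)$ is the number of vertices labeled $x$ and $e_{\alpha^*}(x)$ is the number of edges labeled $x$; such an $\alpha$ is called a signed product cordial labeling. The square of the path $P_n^2$ is the graph obtained from the path $P_n=v_1v_2\cdots v_n$ by additionally joining every two vertices at distance $2$ in $P_n$. Thus its edges are $v_iv_{i+1}$ for $1\le i\le n-1$ and $v_iv_{i+2}$ for $1\le i\le n-2$. *)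

(* Defs.v *)
From mathcomp Require Import all_boot all_order all_algebra.
Set Implicit Arguments. Unset Strict Implicit. Unset Printing Implicit Defensive.
Import GRing.Theory Num.Theory.
Local Open Scope ring_scope.

(* Vertices of P_n^2 are v_1..v_n, represented as i : 'I_n (v_{i+1}). *)
Definition sqpath_edge (n : nat) (i j : 'I_n) : bool :=
  ((i < j)%N && ((j == i.+1 :> nat) || (j == i.+2 :> nat))).

Definition is_pm1_labeling (n : nat) (alpha : 'I_n -> int) : Prop :=
  forall i, alpha i = 1 \/ alpha i = -1.

Definition vcount (n : nat) (alpha : 'I_n -> int) (x : int) : nat :=
  #|[set i : 'I_n | alpha i == x]|.

Definition ecount (n : nat) (alpha : 'I_n -> int) (x : int) : nat :=
  #|[set p : 'I_n * 'I_n | sqpath_edge p.1 p.2 && (alpha p.1 * alpha p.2 == x)]|.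

Definition signed_product_cordial_labeling (n : nat) (alpha : 'I_n -> int) : Prop :=
  is_pm1_labeling alpha /\
  (`|(vcount alpha (-1))%:Z - (vcount alpha 1)%:Z| <= 1) /\
  (`|(ecount alpha (-1))%:Z - (ecount alpha 1)%:Z| <= 1).

Definition sqpath_signed_product_cordial (n : nat) : Prop :=
  exists alpha : 'I_n -> int, signed_product_cordial_labeling alpha.

(* Main.v *)
Require Import Defs.
From mathcomp Require Import all_boot all_order all_algebra.
From mathcomp Require Import zify.
Set Implicit Arguments. Unset Strict Implicit. Unset Printing Implicit Defensive.
Import GRing.Theory Num.Theory.

Definition a (k : nat) : int := if odd k then (-1)%R else 1%R.

Lemma card_setE (T : finType) (P : pred T) :
  #|[set x | P x]| = \sum_(x : T) (P x : nat).
Proof.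
rewrite -sum1_card big_mkcond /=; apply: eq_bigr => x _; rewrite inE.
by case: (P x).
Qed.

Lemma sum_eqk m k : \sum_(j < m) (j == k :> nat : nat) = (k < m).
Proof.
elim: m => [|m IH]; first by rewrite big_ord0.
rewrite big_ord_recr /= IH; case: (ltngtP k m) => H.
- by rewrite ltnS ltnW.
- by rewrite ltnNge H.
- by rewrite H ltnSn.
Qed.

Lemma sum_shift m d n : \sum_(i < m) (i + d < n : nat) = minn m (n - d).
Proof.
elim: m => [|m IH]; first by rewrite big_ord0 min0n.
rewrite big_ord_recr /= IH. case: (boolP (m + d < n)) => H /=; lia.
Qed.

Lemma sum_odd n : \sum_(i < n) (~~ odd i : nat) = \sum_(i < n) (odd i : nat) + odd n.
Proof.
elim: n => [|n IH]; first by rewrite !big_ord0.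
rewrite !big_ord_recr /= IH. by case: (odd n) => /=; lia.
Qed.

Lemma pair_sum n (F : nat -> nat -> bool) :
  #|[set p : 'I_n * 'I_n | F p.1 p.2]| = \sum_(i < n) \sum_(j < n) (F i j : nat).
Proof.
rewrite card_setE. by rewrite pair_bigA.
Qed.

Theorem theorem2p3 (n : nat) : (3 <= n)%N -> sqpath_signed_product_cordial n.
Proof.
move=> Hn.
exists (fun i : 'I_n => a i).
split; [|split].
- move=> i; rewrite /a; case: (odd i); auto.
- rewrite /vcount.
  have E1 : #|[set i : 'I_n | a i == (-1)%R]| = \sum_(i < n) (odd i : nat).
    rewrite card_setE; apply: eq_bigr => i _; rewrite /a; by case: (odd i).
  have E2 : #|[set i : 'I_n | a i == 1%R]| = \sum_(i < n) (~~ odd i : nat).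
    rewrite card_setE; apply: eq_bigr => i _; rewrite /a; by case: (odd i).
  rewrite E1 E2 sum_odd. case: (odd n) => /=; lia.
- rewrite /ecount /sqpath_edge.
  have E1 : forall x : int, #|[set p : 'I_n * 'I_n | ((p.1 < p.2)%N && ((p.2 == (p.1).+1 :> nat) || (p.2 == (p.1).+2 :> nat))) && (a p.1 * a p.2 == x)%R]|
      = \sum_(i < n) \sum_(j < n) ((((i < j)%N && ((j == i.+1 :> nat) || (j == i.+2 :> nat))) && (a i * a j == x)%R) : nat).
    move=> x; rewrite card_setE pair_bigA /=. by [].
  rewrite !E1.
  have G1 : forall i j : nat, (((i < j)%N && ((j == i.+1) || (j == i.+2))) && ((a i * a j)%R == (-1)%R)) = (j == i.+1).
    move=> i j; case: (eqVneq j i.+1) => [->|H1].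
      by rewrite ltnSn /= /a /=; case: (odd i).
    case: (eqVneq j i.+2) => [->|H2]; last by rewrite andbF.
    by rewrite /= /a /= negbK; case: (odd i); rewrite ?andbF.
  have G2 : forall i j : nat, (((i < j)%N && ((j == i.+1) || (j == i.+2))) && ((a i * a j)%R == 1%R)) = (j == i.+2).
    move=> i j; case: (eqVneq j i.+1) => [->|H1].
      have -> : (i.+1 == i.+2) = false by apply/eqP; lia.
      rewrite ltnSn /= /a /=. by case: (odd i).
    case: (eqVneq j i.+2) => [->|H2]; last by rewrite /= andbF.
    by rewrite /= ltnW // /a /= negbK; case: (odd i).
  have S1 : \sum_(i < n) \sum_(j < n) ((((i < j)%N && ((j == i.+1 :> nat) || (j == i.+2 :> nat))) && ((a i * a j)%R == (-1)%R)) : nat) = minn n (n - 1).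
    rewrite -(sum_shift n 1 n); apply: eq_bigr => i _; rewrite addn1 -sum_eqk.
    by apply: eq_bigr => j _; rewrite G1.
  have S2 : \sum_(i < n) \sum_(j < n) ((((i < j)%N && ((j == i.+1 :> nat) || (j == i.+2 :> nat))) && ((a i * a j)%R == 1%R)) : nat) = minn n (n - 2).
    rewrite -(sum_shift n 2 n); apply: eq_bigr => i _; rewrite addn2 -sum_eqk.
    by apply: eq_bigr => j _; rewrite G2.
  rewrite S1 S2. lia.
Qed.
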